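(* Let $r\ge 2$ be an integer, $\tau_0>0$, $k_a\in(0,\tfrac12)$, and $$h_w> \frac{4\tau_0}{(1+r)(1+2k_a)}.$$ Then there exist $k_v>0$, $k_p>0$ such that for every $\tau\in[0,\tau_0]$, the polynomial $\tau s^3+s^2+(2k_v+(1+r)k_ph_w)s+2k_p$ is Hurwitz and $$2\sup_{\omega\in\mathbb{R}}|H_0(j\omega;\tau)|\le 1,\qquad H_0(s;\tau)=\frac{k_as^2+k_vs+k_p}{\tau s^3+s^2+(2k_v+(1+r)k_ph_w)s+2k_p}.$$ Consequently, for every $\tau\in[0,\tau_0]$ and $\omega\in\mathbb{R}$, all roots of $z^r-H_0(j\omega;\tau)z^{r-1}-H_0(j\omega;\tau)$ satisfy $|z|\le1$ (robust string stability).
   Context: Platoon of identical vehicles with dynamics $\ddot x_i=a_i$, $\tau\dot a_i+a_i=u_i$, parasitic lag $\tau\in[0,\tau_0]$, each vehicle using information from its immediate predecessor and its $r$-th predecessor via $u_i=\sum_{l\in\{1,r\}}\big[k_a a_{i-l}-k_v(v_i-v_{i-l})-k_p(x_i-x_{i-l}+d_l+l h_w v_i)\big]$ (equal gains for $l=1$ and $l=r$). With spacing errors $e_i=x_i-x_{i-1}+d+h_wv_i$, errors propagate as $E_i(s)=H_0(s)E_{i-1}(s)+H_0(s)E_{i-r}(s)$. *)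

(* Defs.v *)
(* The complex plane is modelled by an arbitrary
   numClosedFieldType C (e.g. algC, or the complex numbers); real numbers are
   the elements x with x \is Num.real, 'Re/'Im/'i are the usual notions. *)
From HB Require Import structures.
From mathcomp Require Import all_boot all_order all_algebra.
Set Implicit Arguments. Unset Strict Implicit. Unset Printing Implicit Defensive.
Import Order.TTheory GRing.Theory Num.Theory.
Local Open Scope ring_scope.

Definition den_poly (C : numClosedFieldType) (r : nat) (kv kp hw tau : C)
  : {poly C} :=
  tau *: 'X^3 + 'X^2 + (2 * kv + (1 + r%:R) * kp * hw) *: 'X + (2 * kp)%:P.

Definition num_poly (C : numClosedFieldType) (ka kv kp : C) : {poly C} :=
  ka *: 'X^2 + kv *: 'X + kp%:P.

Definition H0 (C : numClosedFieldType) (r : nat) (ka kv kp hw tau s : C) : C :=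
  (num_poly ka kv kp).[s] / (den_poly r kv kp hw tau).[s].

Definition hurwitz (C : numClosedFieldType) (p : {poly C}) : Prop :=
  p != 0 /\ forall z : C, root p z -> 'Re z < 0.

(* Main.v *)
From HB Require Import structures.
From mathcomp Require Import all_boot all_order all_algebra.
From mathcomp Require Import ring lra.
Import Order.TTheory GRing.Theory Num.Theory.
Local Open Scope ring_scope.
Require Import Defs.

Lemma string_lemma (C : numClosedFieldType) (r : nat) (h z : C) :
  (1 <= r)%N -> 2 * `|h| <= 1 -> z ^+ r - h * z ^+ r.-1 - h = 0 -> `|z| <= 1.
Proof.
move=> r1 hh E.
have Rz : `|z| \is Num.real by apply: normr_real.
rewrite real_leNgt ?real1 //; apply/negP => z1.
have zr : z ^+ r = h * (z ^+ r.-1 + 1).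
  by apply/eqP; rewrite -subr_eq0 -{1}E; apply/eqP; set u := z ^+ r; set v := z ^+ r.-1; ring.
have z0 : 0 < `|z| by apply: lt_trans z1.
set y := `|z| ^+ r.-1.
have y1 : 1 <= y by rewrite /y exprn_ege1 // ltW.
have y0 : 0 < y by apply: lt_le_trans y1.
have ry : `|z| ^+ r = `|z| * y by rewrite /y -exprS prednK.
have A : 2 * `|z| ^+ r <= y + 1.
  rewrite -normrX zr normrM mulrA.
  apply: le_trans (ler_wpM2r _ hh) _; first by [].
  rewrite mul1r; apply: le_trans (ler_normD _ _) _.
  by rewrite normrX normr1.
have B : y + 1 <= 2 * y by rewrite mulr2n mulrDl mul1r lerD2l.
have D : 2 * y < 2 * `|z| ^+ r.
  by rewrite ry ltr_pM2l // ltr_pMl.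
by have := lt_le_trans D (le_trans A B); rewrite ltxx.
Qed.

Lemma hurwitz_cubic (C : numClosedFieldType) (t a b : C) :
  0 <= t -> 0 < b -> 0 < a - t * b ->
  let p := t *: 'X^3 + 'X^2 + a *: 'X + b%:P in
  p != 0 /\ forall z : C, root p z -> 'Re z < 0.
Proof.
move=> t0 b0 d0 p.
have pz z : p.[z] = t * z ^+ 3 + z ^+ 2 + a * z + b.
  by rewrite /p !hornerE.
split.
  apply/negP => /eqP p0; have := pz 0; rewrite p0 horner0.
  rewrite expr0n /= expr0n /= !mulr0 !add0r => b00.
  by move: b0; rewrite -b00 ltxx.
move=> z /rootP; rewrite pz => E.
have Rt : t \is Num.real by apply: ger0_real.
have Rb : b \is Num.real by apply: gtr0_real.
have Rd : a - t * b \is Num.real by apply: gtr0_real.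
have z0 : z != 0.
  apply/negP => /eqP z0; move: E; rewrite z0 expr0n /= expr0n /= !mulr0 !add0r => b00.
  by move: b0; rewrite b00 ltxx.
rewrite real_ltNge ?Creal_Re ?real0 //; apply/negP => x0.
set d := a - t * b in d0 Rd.
set A := `|z| ^+ 2.
set m := `|t * z + 1| ^+ 2.
have RA : A \is Num.real by rewrite /A rpredX ?normr_real.
have Rm : m \is Num.real by rewrite /m rpredX ?normr_real.
have cj : (t * z + 1)^* = t * z^* + 1 by rewrite rmorphD rmorphM /= conj_Creal // conjC1.
have E2 : (z * A + b * z^*) * m + (d * A) * (t * z^* + 1) = 0.
  rewrite /m /A !normCK cj.
  have F : (z ^+ 2 + b) * (t * z + 1) + d * z = 0.
    by rewrite -E /d; ring.
  rewrite -[RHS](mulr0 (z^* * (t * z^* + 1))) -F; ring.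
have E3 := congr1 (fun u => 'Re u) E2; move: E3 => /=.
rewrite raddfD /= ReMr // raddfD /= ReMr // ReMl // ReMl ?rpredM //.
rewrite raddfD /= ReMl // Re_conj.
have -> : 'Re (1 : C) = 1 by apply/(Creal_ReP _ (@real1 _)).
rewrite raddf0 => E4.
have A0 : 0 < A by rewrite /A exprn_gt0 // normr_gt0.
have m0 : 0 <= m by rewrite /m exprn_ge0.
have P1 : 0 <= ('Re z * A + b * 'Re z) * m.
  by rewrite mulr_ge0 // addr_ge0 // mulr_ge0 // ltW.
have P2 : 0 < d * A * (t * 'Re z + 1).
  apply: mulr_gt0; first exact: mulr_gt0 d0 A0.
  by rewrite addrC ltr_wpDr // mulr_ge0.
have := ltr_wpDl P1 P2; rewrite E4 ltxx //.
all: by rewrite normr_real.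
Qed.

Lemma mag_bound (C : numClosedFieldType) (t ka kv kp a w : C) :
  t \is Num.real -> ka \is Num.real -> kv \is Num.real -> kp \is Num.real ->
  a \is Num.real -> w \is Num.real ->
  0 <= 1 - 4 * ka ^+ 2 - 2 * a * t ->
  0 <= a ^+ 2 - 4 * kv ^+ 2 - 4 * kp * (1 - 2 * ka) ->
  2 * `|(ka *: 'X^2 + kv *: 'X + kp%:P).[w * 'i] /
        (t *: 'X^3 + 'X^2 + a *: 'X + (2 * kp)%:P).[w * 'i]| <= 1.
Proof.
move=> Rt Rka Rkv Rkp Ra Rw L0 K0.
have iE : 'i ^+ 2 = -1 :> C := sqrCi C.
have EN : (ka *: 'X^2 + kv *: 'X + kp%:P).[w * 'i]
    = (kp - ka * w ^+ 2) + 'i * (kv * w).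
  rewrite !(hornerD, hornerZ, hornerXn, hornerX, hornerC); apply/eqP; rewrite -subr_eq0; apply/eqP.
  move: iE; move: ('i : C) => j iE.
  transitivity ((j ^+ 2 + 1) * (ka * w ^+ 2)); first ring.
  by rewrite iE addNr mul0r.
have ED : (t *: 'X^3 + 'X^2 + a *: 'X + (2 * kp)%:P).[w * 'i]
    = (2 * kp - w ^+ 2) + 'i * (a * w - t * w ^+ 3).
  rewrite !(hornerD, hornerZ, hornerXn, hornerX, hornerC); apply/eqP; rewrite -subr_eq0; apply/eqP.
  move: iE; move: ('i : C) => j iE.
  transitivity ((j ^+ 2 + 1) * (t * w ^+ 3 * j + w ^+ 2)); first ring.
  by rewrite iE addNr mul0r.
rewrite EN ED.
set N := (kp - ka * w ^+ 2) + 'i * (kv * w).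
set D := (2 * kp - w ^+ 2) + 'i * (a * w - t * w ^+ 3).
have NR : `|N| ^+ 2 = (kp - ka * w ^+ 2) ^+ 2 + (kv * w) ^+ 2.
  by rewrite normC2_rect // ?rpredB ?rpredM ?rpredX.
have DR : `|D| ^+ 2 = (2 * kp - w ^+ 2) ^+ 2 + (a * w - t * w ^+ 3) ^+ 2.
  by rewrite normC2_rect // ?rpredB ?rpredM ?rpredX ?rpred_nat.
have x0 : 0 <= w ^+ 2 by rewrite -(real_normK Rw) exprn_ge0.
have key : (2 * `|N|) ^+ 2 <= `|D| ^+ 2.
  rewrite -subr_ge0 exprMn NR DR.
  have -> : (2 * kp - w ^+ 2) ^+ 2 + (a * w - t * w ^+ 3) ^+ 2 -
     2 ^+ 2 * ((kp - ka * w ^+ 2) ^+ 2 + (kv * w) ^+ 2)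
     = w ^+ 2 * ((t * w ^+ 2) ^+ 2 + w ^+ 2 * (1 - 4 * ka ^+ 2 - 2 * a * t)
         + (a ^+ 2 - 4 * kv ^+ 2 - 4 * kp * (1 - 2 * ka))) by ring.
  apply: mulr_ge0 => //; apply: addr_ge0 => //; apply: addr_ge0; last exact: mulr_ge0.
  by rewrite -real_normK ?rpredM // exprn_ge0.
have key2 : 2 * `|N| <= `|D|.
  by move: key; rewrite ler_sqr // qualifE /= ?mulr_ge0.
have [D0|D0] := eqVneq D 0.
  by rewrite D0 invr0 mulr0 normr0 mulr0 ler01.
rewrite normf_div mulrA ler_pdivrMr ?normr_gt0 // mul1r //.
Qed.

Theorem corollary1 (C : numClosedFieldType) (r : nat) (tau0 ka hw : C) :
  (2 <= r)%N -> 0 < tau0 -> 0 < ka -> ka < 2^-1 ->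
  4 * tau0 / ((1 + r%:R) * (1 + 2 * ka)) < hw ->
  exists kv kp : C, 0 < kv /\ 0 < kp /\
    (forall tau : C, 0 <= tau <= tau0 ->
       hurwitz (den_poly r kv kp hw tau) /\
       (forall w : C, w \is Num.real ->
          2 * `|H0 r ka kv kp hw tau (w * 'i)| <= 1)) /\
    (forall tau w z : C, 0 <= tau <= tau0 -> w \is Num.real ->
       let h := H0 r ka kv kp hw tau (w * 'i) in
       z ^+ r - h * z ^+ r.-1 - h = 0 -> `|z| <= 1).
Proof.
move=> r2 t0 ka0 ka1 hh.
have two0 : (0 : C) < 2 by rewrite ltr0n.
have R0 : (0 : C) < 1 + r%:R by rewrite addr_gt0 // ltr0n; apply: leq_trans r2.
have eta0 : 0 < 1 + 2 * ka by rewrite addr_gt0 // mulr_gt0.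
have ka2 : 2 * ka < 1.
  have : 2 * ka < 2 * 2^-1 by rewrite ltr_pM2l.
  by rewrite mulfV // gt_eqF.
have eps0 : 0 < 1 - 2 * ka by rewrite subr_gt0.
have eta2 : 1 + 2 * ka < 2 by rewrite -[X in _ < X]/(1 + 1 : C) ltrD2l.
have hw0 : 0 < hw.
  apply: lt_trans hh; rewrite divr_gt0 ?mulr_gt0 //.
pose beta := (1 + r%:R) * hw.
have b0 : 0 < beta by rewrite /beta mulr_gt0.
have hh2 : 4 * tau0 < beta * (1 + 2 * ka).
  move: hh; rewrite ltr_pdivrMr ?mulr_gt0 // => hh.
  by apply: (lt_le_trans hh); rewrite /beta le_eqVlt; apply/orP; left; apply/eqP; ring.
have q0 : 0 < (1 + 2 * ka) - 4 * tau0 / beta.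
  by rewrite subr_gt0 ltr_pdivrMr // [(1 + 2 * ka) * beta]mulrC.
pose eps := 1 - 2 * ka.
pose eta := 1 + 2 * ka.
pose kv := eps / beta.
pose g := eps * (eta - 4 * tau0 / beta).
pose kp := g / (4 * tau0 * beta).
have kv0 : 0 < kv by rewrite divr_gt0.
have g0 : 0 < g by rewrite mulr_gt0.
have kp0 : 0 < kp by rewrite divr_gt0 // !mulr_gt0.
have bne : beta != 0 by rewrite gt_eqF.
have Rne : (1 + r%:R : C) != 0 by rewrite gt_eqF.
have hwne : hw != 0 by rewrite gt_eqF.
have tne : tau0 != 0 by rewrite gt_eqF.
pose a := 2 * kv + (1 + r%:R) * kp * hw.
have a0 : 0 < a by apply: addr_gt0; [exact: mulr_gt0 | exact: mulr_gt0 (mulr_gt0 R0 kp0) hw0].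
have Lt0 : 1 - 4 * ka ^+ 2 - 2 * a * tau0 = g / 2.
  rewrite /a /kp /g /kv /eps /eta /beta; field.
  by rewrite hwne Rne tne.
have Kid : a ^+ 2 - 4 * kv ^+ 2 - 4 * kp * (1 - 2 * ka) = (beta * kp) ^+ 2.
  rewrite /a /kp /g /kv /eps /eta /beta; field.
  by rewrite ?hwne ?Rne ?tne.
have dt0 : a - tau0 * (2 * kp) =
    eps * ((2 - eta) + 2 + 4 * tau0 / beta) / (2 * beta) + beta * kp.
  rewrite /a /kp /g /kv /eps /eta /beta; field.
  by rewrite ?hwne ?Rne ?tne.
have main : forall tau : C, 0 <= tau <= tau0 ->
       hurwitz (den_poly r kv kp hw tau) /\
       (forall w : C, w \is Num.real ->
          2 * `|H0 r ka kv kp hw tau (w * 'i)| <= 1).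
  move=> tau /andP[ta tb].
  have Rt : tau \is Num.real by apply: ger0_real.
  split.
    rewrite /hurwitz /den_poly; apply: hurwitz_cubic => //; first by rewrite mulr_gt0.
    have -> : 2 * kv + (1 + r%:R) * kp * hw - tau * (2 * kp)
       = (a - tau0 * (2 * kp)) + (tau0 - tau) * (2 * kp) by rewrite /a; ring.
    apply: ltr_wpDr; first by rewrite mulr_ge0 ?subr_ge0 // ltW // mulr_gt0.
    rewrite dt0; apply: addr_gt0; last by rewrite mulr_gt0.
    apply: divr_gt0; last exact: mulr_gt0 two0 b0.
    apply: mulr_gt0 => //.
    apply: addr_gt0; last by rewrite divr_gt0 // mulr_gt0 // ltr0n.
    by apply: addr_gt0 => //; rewrite subr_gt0.
  move=> w Rw; rewrite /H0 /num_poly /den_poly.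
  apply: mag_bound => //.
  - by apply: gtr0_real.
  - by apply: gtr0_real.
  - by apply: gtr0_real.
  - by apply: gtr0_real.
  - have -> : 1 - 4 * ka ^+ 2 - 2 * (2 * kv + (1 + r%:R) * kp * hw) * tau
       = (1 - 4 * ka ^+ 2 - 2 * a * tau0) + 2 * a * (tau0 - tau) by rewrite /a; ring.
    rewrite Lt0; apply: addr_ge0; first by apply: ltW; apply: divr_gt0.
    apply: mulr_ge0; last by rewrite subr_ge0.
    by apply: ltW; exact: mulr_gt0 two0 a0.
  - rewrite -/a Kid; apply: exprn_ge0; apply: ltW; exact: mulr_gt0.
exists kv, kp; split => //; split => //; split => //.
move=> tau w z tt Rw h E.
apply: (@string_lemma C r h z _ _ E); first by apply: leq_trans r2.
by have [_ ] := main tau tt; apply.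
Qed.
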